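(* There exists a family of MDPs $(\mathcal{M}_n)_{n\ge1}$, where $\mathcal{M}_n$ has $2n+1$ states, such that $|V(\mathsf{est}_{\mathsf{MDP}}(\tau))|=2^n$ for every trace $\tau$ with $|\tau|>2$ that is observed with positive probability under some scheduler (i.e., $\Pr^\sigma(\tau)>0$ for some scheduler $\sigma$).
   Context: An MDP is a tuple $\langle S,\iota,\mathsf{Act},P,\mathsf{Z},\mathsf{obs}\rangle$: finite state set $S$, initial distribution $\iota\in\mathsf{Distr}(S)$, finite action set $\mathsf{Act}$, partial transition function $P\colon S\times\mathsf{Act}\rightharpoonup\mathsf{Distr}(S)$ (write $P(s,\alpha,s')=P(s,\alpha)(s')$), finite observation set $\mathsf{Z}$, observation function $\mathsf{obs}\colon S\to\mathsf{Distr}(\mathsf{Z})$; $\mathsf{AvAct}(s)=\{\alpha\mid P(s,\alpha)\text{ defined}\}\neq\emptyset$. A scheduler $\sigma$ maps each finite path $\pi=s_0a_0\dots s_n$ (with $\iota(s_0)>0$, $P(s_i,a_i)(s_{i+1})>0$) to a distribution on $\mathsf{AvAct}(s_n)$, and $\Pr^\sigma(\pi)=\iota(s_0)\prod_{i<n}\sigma(s_0a_0\dots s_i)(a_i)P(s_i,a_i)(s_{i+1})$; for a trace $\tau=z_0\dots z_n$, $|\tau|$ is its length, $\Pr(\tau\mid\pi)=\prod_i\mathsf{obs}(s_i)(z_i)$ if $\pi$ has $n+1$ states and $0$ otherwise, and $\Pr^\sigma(\tau)=\sum_\pi\Pr^\sigma(\pi)\Pr(\tau\mid\pi)$. Beliefs: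 $\mathsf{Bel}=\mathsf{Distr}(S)\cup\{\mathbf{0}\}$ in $\mathbb{R}^S$. $\mathsf{est}_{\mathsf{MDP}}(z)=\{b_z\}$ with $b_z(s)=\iota(s)\mathsf{obs}(s)(z)/\sum_{\hat s}\iota(\hat s)\mathsf{obs}(\hat s)(z)$ (or $\mathbf{0}$ if the denominator is $0$), $\mathsf{est}_{\mathsf{MDP}}(\tau\cdot z)=\bigcup_{\mathsf{bel}\in\mathsf{est}_{\mathsf{MDP}}(\tau)}\mathsf{est}^{\mathsf{up}}(\mathsf{bel},z)$, where $\mathsf{bel}'\in\mathsf{est}^{\mathsf{up}}(\mathsf{bel},z)$ iff there is $\varsigma\colon S\to\mathsf{Distr}(\mathsf{Act})$ with $\varsigma(s)$ supported in $\mathsf{AvAct}(s)$ and $\mathsf{bel}'(s')=\dfrac{\sum_s\mathsf{bel}(s)\sum_\alpha\varsigma(s)(\alpha)P(s,\alpha,s')\mathsf{obs}(s')(z)}{\sum_s\mathsf{bel}(s)\sum_\alpha\varsigma(s)(\alpha)\sum_{\hat s}P(s,\alpha,\hat s)\mathsf{obs}(\hat s)(z)}$ ($0/0=0$). $V(B)$ is the set of elements of $B$ that are not convex combinations of other elements of $B$. *)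

(* Defs.v *)
From HB Require Import structures.
From mathcomp Require Import all_boot all_order all_algebra.
From mathcomp Require Import reals.
Set Implicit Arguments. Unset Strict Implicit. Unset Printing Implicit Defensive.
Import Order.TTheory GRing.Theory Num.Theory.
Local Open Scope ring_scope.

Record mdp (R : realType) := Mdp {
  mdp_S : finType;
  mdp_A : finType;
  mdp_Z : finType;
  mdp_iota : {ffun mdp_S -> R};
  mdp_P : mdp_S -> mdp_A -> option {ffun mdp_S -> R};
  mdp_obs : mdp_S -> {ffun mdp_Z -> R} }.

Definition is_distr (R : realType) (T : finType) (d : {ffun T -> R}) : Prop :=
  (forall x, 0 <= d x) /\ \sum_x d x = 1.

(* P(s, a, s'), with value 0 when P(s,a) is undefined (never used then). *)
Definition Ptr (R : realType) (M : mdp R) (s : mdp_S M) (a : mdp_A M) (s' : mdp_S M) : R :=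
  if @mdp_P R M s a is Some d then d s' else 0.

Definition avact (R : realType) (M : mdp R) (s : mdp_S M) (a : mdp_A M) : bool :=
  @mdp_P R M s a != None.

Definition wf_mdp (R : realType) (M : mdp R) : Prop :=
  is_distr (mdp_iota M) /\
  (forall s a d, @mdp_P R M s a = Some d -> is_distr d) /\
  (forall s, is_distr (@mdp_obs R M s)) /\
  (forall s : mdp_S M, exists a, avact s a).

(* A finite path s0 a0 s1 ... an-1 sn is represented as (s0, [:: (a0,s1); ...; (an-1,sn)]). *)
Definition scheduler (R : realType) (M : mdp R) :=
  mdp_S M -> seq (mdp_A M * mdp_S M) -> {ffun mdp_A M -> R}.

Definition is_sched (R : realType) (M : mdp R) (sigma : scheduler M) : Prop :=
  forall s0 p, is_distr (sigma s0 p) /\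
    (forall a, 0 < sigma s0 p a -> avact (last s0 (map snd p)) a).

Definition Pr_path (R : realType) (M : mdp R) (sigma : scheduler M)
    (s0 : mdp_S M) (k : nat) (p : k.-tuple (mdp_A M * mdp_S M)) : R :=
  @mdp_iota R M s0 *
  \prod_(i < k) (sigma s0 (take i p) (tnth p i).1 *
                 Ptr (last s0 (map snd (take i p))) (tnth p i).1 (tnth p i).2).

(* Pr^sigma(tau) = sum_pi Pr^sigma(pi) Pr(tau | pi); only paths with |tau| states contribute. *)
Definition Pr_trace (R : realType) (M : mdp R) (sigma : scheduler M)
    (tau : seq (mdp_Z M)) : R :=
  match tau with
  | [::] => 0
  | z0 :: zs =>
      \sum_(s0 : mdp_S M) \sum_(p : (size zs).-tuple (mdp_A M * mdp_S M))
        Pr_path sigma s0 p *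
        (@mdp_obs R M s0 z0 * \prod_(i < size zs) @mdp_obs R M (tnth p i).2 (nth z0 zs i))
  end.

(* Beliefs are vectors in R^S. In MathComp x / 0 = 0, matching the 0/0 = 0 convention
   (and the "0 if the denominator is 0" case of b_z). *)
Definition est_init (R : realType) (M : mdp R) (z : mdp_Z M) : {ffun mdp_S M -> R} :=
  [ffun s => @mdp_iota R M s * @mdp_obs R M s z /
             \sum_(t : mdp_S M) @mdp_iota R M t * @mdp_obs R M t z].

Definition is_local_sched (R : realType) (M : mdp R)
    (vs : mdp_S M -> {ffun mdp_A M -> R}) : Prop :=
  forall s, is_distr (vs s) /\ (forall a, 0 < vs s a -> avact s a).

Definition est_up (R : realType) (M : mdp R) (bel : {ffun mdp_S M -> R}) (z : mdp_Z M)
    (bel' : {ffun mdp_S M -> R}) : Prop :=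
  exists vs : mdp_S M -> {ffun mdp_A M -> R}, is_local_sched vs /\
    bel' = [ffun s' =>
      (\sum_s bel s * \sum_a vs s a * Ptr s a s' * @mdp_obs R M s' z) /
      (\sum_s bel s * \sum_a vs s a *
           \sum_(sh : mdp_S M) Ptr s a sh * @mdp_obs R M sh z)].

Fixpoint est_aux (R : realType) (M : mdp R) (B : {ffun mdp_S M -> R} -> Prop)
    (tau : seq (mdp_Z M)) : {ffun mdp_S M -> R} -> Prop :=
  match tau with
  | [::] => B
  | z :: t => est_aux (fun b' => exists b, B b /\ est_up b z b') t
  end.

Definition est (R : realType) (M : mdp R) (tau : seq (mdp_Z M)) :
    {ffun mdp_S M -> R} -> Prop :=
  match tau with
  | [::] => fun _ => False
  | z :: t => est_aux (fun b => b = est_init z) t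
  end.

Definition vertices (R : realType) (S : finType) (B : {ffun S -> R} -> Prop)
    (b : {ffun S -> R}) : Prop :=
  B b /\
  ~ (exists (k : nat) (w : 'I_k -> R) (x : 'I_k -> {ffun S -> R}),
        (forall i, 0 <= w i) /\ \sum_i w i = 1 /\
        (forall i, B (x i) /\ x i <> b) /\
        (forall s, b s = \sum_i w i * x i s)).

Definition card_is (T : eqType) (P : T -> Prop) (n : nat) : Prop :=
  exists l : seq T, uniq l /\ size l = n /\ (forall x, P x <-> x \in l).

(* Main.v *)
Require Import Defs.
From HB Require Import structures.
From mathcomp Require Import all_boot all_order all_algebra reals.
From mathcomp Require Import ring lra.
Set Implicit Arguments. Unset Strict Implicit. Unset Printing Implicit Defensive.
Import Order.TTheory GRing.Theory Num.Theory.
Local Open Scope ring_scope.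

Lemma big_opt (R : realType) (T : finType) (F : option T -> R) :
  \sum_(s : option T) F s = F None + \sum_t F (Some t).
Proof.
rewrite (bigD1 None) //=; congr (_ + _).
rewrite (reindex_omap Some (fun x => x)) //=; last by case.
by apply: eq_bigl => t; rewrite eqxx.
Qed.

Lemma big_St (R : realType) n (F : option ('I_n * bool) -> R) :
  \sum_(s : option ('I_n * bool)) F s =
  F None + \sum_(i < n) (F (Some (i, true)) + F (Some (i, false))).
Proof.
rewrite big_opt; congr (_ + _).
transitivity (\sum_(i < n) \sum_(b : bool) F (Some (i, b))).
  by rewrite pair_big; apply: eq_bigr => -[].
by apply: eq_bigr => i _; rewrite big_bool.
Qed.
Section Constr.
Variable R : realType.
Variable n : nat.
Hypothesis n_gt0 : (0 < n)%N.
Local Notation St := (option ('I_n * bool)).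

Definition fb (p : 'I_n -> R) : {ffun St -> R} :=
  [ffun s => match s with None => 0 | Some (i, c) => (if c then p i else 1 - p i) / n%:R end].
Definition tgt (s : St) (a : bool) : St := if s is Some (i, _) then Some (i, a) else None.
Definition ptm (t : St) : {ffun St -> R} := [ffun s => (s == t)%:R].
Definition Mn : mdp R :=
  @Mdp R St bool unit (fb (fun _ => 1)) (fun s a => Some (ptm (tgt s a))) (fun _ => [ffun _ => 1]).

Lemma nR_neq0 : n%:R != 0 :> R.
Proof. by rewrite pnatr_eq0 -lt0n. Qed.

Lemma sum_fb p : \sum_s fb p s = 1.
Proof.
rewrite big_St ffunE add0r.
transitivity (\sum_(i < n) (n%:R^-1 : R)).
  by apply: eq_bigr => i _; rewrite !ffunE -mulrDl addrC subrK mul1r.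
by rewrite sumr_const card_ord -[_ *+ n]mulr_natr mulVf // nR_neq0.
Qed.

Definition inC (b : {ffun St -> R}) :=
  exists p : 'I_n -> R, (forall i, 0 <= p i <= 1) /\ b = fb p.

Lemma Ptr_Mn (s : St) (a : bool) (s' : St) : @Ptr R Mn s a s' = (s' == tgt s a)%:R.
Proof. by rewrite /Ptr /= ffunE. Qed.

Lemma sum_pt (t : St) : \sum_(s : St) ((s == t)%:R : R) = 1.
Proof. by rewrite (bigD1 t) //= eqxx big1 ?addr0 // => s /negbTE ->. Qed.

Lemma sum_Ptr (s : St) (a : bool) :
  \sum_(sh : St) @Ptr R Mn s a sh * @mdp_obs R Mn sh tt = 1.
Proof.
rewrite -(sum_pt (tgt s a)); apply: eq_bigr => sh _; by rewrite Ptr_Mn /= ffunE mulr1.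
Qed.

Lemma fb_ext p q : (forall i, p i = q i) -> fb p = fb q.
Proof. by move=> H; apply/ffunP => -[[i c]|]; rewrite !ffunE ?H. Qed.

Lemma inner (vs : St -> {ffun bool -> R}) (i j : 'I_n) (d c : bool) :
  \sum_a vs (Some (i, d)) a * @Ptr R Mn (Some (i, d)) a (Some (j, c)) * @mdp_obs R Mn (Some (j, c)) tt
  = if i == j then vs (Some (i, d)) c else 0.
Proof.
rewrite big_bool !Ptr_Mn /= ffunE !mulr1 !(inj_eq (@Some_inj _)) !xpair_eqE.
by rewrite (eq_sym j i); case: (i == j); case: c => /=; rewrite ?mulr1 ?mulr0 ?addr0 ?add0r.
Qed.

Lemma step_formula p (vs : St -> {ffun bool -> R}) :
  is_local_sched (M:=Mn) vs ->
  [ffun s' =>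
      (\sum_s fb p s * \sum_a vs s a * @Ptr R Mn s a s' * @mdp_obs R Mn s' tt) /
      (\sum_s fb p s * \sum_a vs s a *
           \sum_(sh : St) @Ptr R Mn s a sh * @mdp_obs R Mn sh tt)]
  = fb (fun i => p i * vs (Some (i, true)) true + (1 - p i) * vs (Some (i, false)) true).
Proof.
move=> H.
have vsum s : vs s true + vs s false = 1.
  by have [[_ +] _] := H s; rewrite big_bool.
have den : (\sum_s fb p s * \sum_a vs s a *
           \sum_(sh : St) @Ptr R Mn s a sh * @mdp_obs R Mn sh tt) = 1.
  rewrite -[RHS](sum_fb p); apply: eq_bigr => s _.
  under eq_bigr => a _ do rewrite sum_Ptr mulr1.
  by have [[_ Hs] _] := H s; rewrite Hs mulr1.
apply/ffunP => s'; rewrite ffunE den divr1.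
case: s' => [[j c]|].
  rewrite big_St ffunE mul0r add0r; under eq_bigr => i _ do rewrite !inner.
  rewrite (bigD1 j) //= eqxx big1 ?addr0; last by move=> i ij; rewrite (negbTE ij) !mulr0 addr0.
  rewrite !ffunE; case: c; first by ring.
  have e1 : vs (Some (j,true)) false = 1 - vs (Some (j,true)) true by have := vsum (Some (j,true)); lra.
  have e2 : vs (Some (j,false)) false = 1 - vs (Some (j,false)) true by have := vsum (Some (j,false)); lra.
  by rewrite e1 e2; ring.
rewrite [RHS]ffunE; apply: big1 => -[[i d]|] _; last by rewrite ffunE mul0r.
rewrite big1 ?mulr0 // => a _; rewrite Ptr_Mn /=.
by rewrite mulr0 mul0r.
Qed.

Lemma est_up_C b b' : inC b -> (@est_up R Mn b tt b' <-> inC b').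
Proof.
case=> p [pb ->]; split.
  case=> vs [H ->]; rewrite step_formula //.
  eexists; split; last reflexivity.
  move=> i.
  have [[v1 s1] _] := H (Some (i, true)); have [[v2 s2] _] := H (Some (i, false)).
  rewrite big_bool in s1; rewrite big_bool in s2.
  have a0 := v1 true; have a1 := v1 false; have b0 := v2 true; have b1 := v2 false.
  have /andP[p0 p1] := pb i.
  have h1 : 0 <= p i * vs (Some (i, true)) true by apply: mulr_ge0.
  have h2 : 0 <= (1 - p i) * vs (Some (i, false)) true by apply: mulr_ge0; lra.
  have h3 : 0 <= p i * vs (Some (i, true)) false by apply: mulr_ge0.
  have h4 : 0 <= (1 - p i) * vs (Some (i, false)) false by apply: mulr_ge0; lra.
  have e1 : p i * vs (Some (i, true)) true + p i * vs (Some (i, true)) false = p i.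
    by rewrite -mulrDr s1 mulr1.
  have e2 : (1 - p i) * vs (Some (i, false)) true + (1 - p i) * vs (Some (i, false)) false = 1 - p i.
    by rewrite -mulrDr s2 mulr1.
  apply/andP; split; lra.
case=> q [qb ->].
exists (fun s : St => [ffun a : bool => ((if s is Some (i, _) then (if a then q i else 1 - q i)
                                     else (if a then 1 else 0)) : R)]).
split.
  move=> s; split; last by move=> a _; rewrite /avact.
  split.
    move=> a; rewrite ffunE; case: s => [[i d]|]; case: a => //; have /andP[] := qb i; lra.
  rewrite big_bool !ffunE; case: s => [[i d]|] //=; [lra | by rewrite addr0].
rewrite step_formula.
  by apply: fb_ext => i /=; rewrite !ffunE; ring.
move=> s; split; last by move=> a _; rewrite /avact.
split.
  move=> a; rewrite ffunE; case: s => [[i d]|]; case: a => //; have /andP[] := qb i; lra.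
rewrite big_bool !ffunE; case: s => [[i d]|] //=; [lra | by rewrite addr0].
Qed.

Lemma fbT q i : n%:R * fb q (Some (i, true)) = q i.
Proof. by rewrite ffunE mulrC divfK // nR_neq0. Qed.

Lemma inC_coord x : inC x -> x = fb (fun i => n%:R * x (Some (i, true))).
Proof. by case=> p [pb ->]; apply: fb_ext => i; rewrite fbT. Qed.

Lemma inC1 : inC (fb (fun _ => 1)).
Proof. by exists (fun _ => 1); split => // i; rewrite ler01 lexx. Qed.

Definition Fb (p : {ffun 'I_n -> bool}) := fb (fun i => (p i)%:R).

Definition upd (y : 'I_n -> R) i v := fun j => if j == i then v else y j.

Lemma vert_iff b : vertices inC b <-> exists p, b = Fb p.
Proof.
split.
  case=> Cb nc; have [y [yb eb]] := Cb; subst b.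
  case: (boolP [forall i, (y i == 0) || (y i == 1)]) => [Hall|].
    exists [ffun i => y i == 1]; apply: fb_ext => i; rewrite ffunE.
    by have /orP[] := forallP Hall i => /eqP ->; rewrite ?eqxx // eq_sym oner_eq0.
  move/forallPn => [i]; rewrite negb_or => /andP[ne0 ne1].
  exfalso; apply: nc.
  exists 2, (fun t : 'I_2 => if t == ord0 then y i else 1 - y i),
    (fun t : 'I_2 => if t == ord0 then fb (upd y i 1) else fb (upd y i 0)).
  split.
    by move=> t; case: (t == ord0); have /andP[] := yb i; lra.
  split.
    by rewrite !big_ord_recl big_ord0 /=; ring.
  split.
    move=> t; split.
      case: (t == ord0); [exists (upd y i 1) | exists (upd y i 0)]; split => // j;
        rewrite /upd; case: (j == i) => //; by rewrite ?lexx ?ler01.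
    case: (t == ord0) => /(congr1 (fun f : {ffun St -> R} => n%:R * f (Some (i, true))));
      rewrite !fbT /upd eqxx => /eqP; rewrite eq_sym; apply/negP; by [rewrite ne1 | rewrite ne0].
  move=> s; rewrite !big_ord_recl big_ord0 /= addr0.
  case: s => [[j c]|]; rewrite !ffunE ?mulr0 ?addr0 // /upd.
  by case: eqVneq => [->|_]; case: c; ring.
case=> p ->; split.
  by exists (fun i => (p i)%:R); split => // i; case: (p i); rewrite ?lexx ?ler01.
case=> k [w [x [w0 [w1 [xC conv]]]]].
have key : forall i t, 0 < w t -> n%:R * x t (Some (i, true)) = (p i)%:R.
  move=> i.
  have e : (p i)%:R = \sum_t w t * (n%:R * x t (Some (i, true))).
    rewrite -[LHS](fbT (fun i => (p i)%:R) i) conv mulr_sumr.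
    by apply: eq_bigr => t _; rewrite mulrCA.
  have yb t : 0 <= n%:R * x t (Some (i, true)) <= 1.
    have [q [qb ->]] := (xC t).1; by rewrite fbT.
  case: (p i) e => /= e t wt.
    have h : \sum_t w t * (1 - n%:R * x t (Some (i, true))) = 0.
      under eq_bigr do rewrite mulrBr mulr1.
      by rewrite sumrB w1 -e subrr.
    have nn : forall j, true -> 0 <= w j * (1 - n%:R * x j (Some (i, true))).
      by move=> j _; apply: mulr_ge0 => //; have /andP[] := yb j; lra.
    have := psumr_eq0P nn h (i:=t) isT; rewrite /= => /eqP; rewrite mulf_eq0 gt_eqF //= subr_eq0.
    by move=> /eqP <-.
  have nn : forall j, true -> 0 <= w j * (n%:R * x j (Some (i, true))).
    by move=> j _; apply: mulr_ge0 => //; have /andP[] := yb j.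
  have := psumr_eq0P nn (esym e) (i:=t) isT; rewrite /= => /eqP; rewrite mulf_eq0 gt_eqF //=.
  by move=> /eqP ->.
have [t wt] : exists t, 0 < w t.
  apply/existsP; apply: contraT; rewrite negb_exists => /forallP H0.
  have : \sum_t w t = 0.
    by apply: big1 => t _; apply/eqP; rewrite eq_le w0 andbT leNgt H0.
  by rewrite w1 => /eqP; rewrite oner_eq0.
apply: (xC t).2.
rewrite (inC_coord (xC t).1); apply: fb_ext => i; exact: key.
Qed.

End Constr.

From Stdlib Require Import FunctionalExtensionality PropExtensionality.

Lemma est_aux_C (R : realType) n (n0 : (0 < n)%N) (t : seq unit) :
  @est_aux R (Mn R n) (@inC R n) t = @inC R n.
Proof.
elim: t => [|z t IH] //=.
case: z.
have -> : (fun b' => exists b, @inC R n b /\ @est_up R (Mn R n) b tt b') = @inC R n.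
  apply: functional_extensionality => b'; apply: propositional_extensionality; split.
    by case=> b [Cb]; rewrite (est_up_C n0 _ Cb).
  move=> Cb'; exists (@fb R n (fun _ => 1)); split; first exact: inC1.
  by rewrite (est_up_C n0 _ (@inC1 R n)).
exact: IH.
Qed.

Theorem lemma6 (R : realType) :
  exists M : nat -> mdp R, forall n : nat, (0 < n)%N ->
    wf_mdp (M n) /\ #|mdp_S (M n)| = (2 * n + 1)%N /\
    forall tau : seq (mdp_Z (M n)), (2 < size tau)%N ->
      (exists sigma : scheduler (M n), is_sched sigma /\ 0 < Pr_trace sigma tau) ->
      card_is (vertices (est tau)) (2 ^ n).
Proof.
exists (Mn R) => n n0.
split.
  split.
    split; last exact: (sum_fb n0).
    move=> -[[i c]|]; rewrite ffunE //; case: c; rewrite ?subrr ?mul0r //.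
    by rewrite mul1r invr_ge0 ler0n.
  split.
    move=> s a d [<-]; split; first by move=> x; rewrite ffunE ler0n.
    by under eq_bigr do rewrite ffunE; exact: (sum_pt R).
  split; last by move=> s; exists true.
  move=> s; split; first by move=> z; rewrite ffunE ler01.
  by under eq_bigr do rewrite ffunE; rewrite sumr_const card_unit.
split.
  by rewrite /= card_option card_prod card_ord card_bool mulnC addn1.
case=> [|z0 [|z1 t]] //= _ _.
have -> : est_aux (fun b' => exists b, b = est_init z0 /\ @est_up R (Mn R n) b z1 b') t
          = @inC R n.
  case: z0 z1 => -[].
  have Hi : est_init (M := Mn R n) tt = @fb R n (fun _ => 1).
    have obs1 : forall s, @mdp_obs R (Mn R n) s tt = 1 by move=> s; rewrite /= ffunE.
    have Hs : \sum_(t : option ('I_n * bool)) @fb R n (fun _ => 1) t * @mdp_obs R (Mn R n) t tt = 1.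
      under eq_bigr do rewrite obs1 mulr1.
      exact: (sum_fb n0).
    by apply/ffunP => s; rewrite ffunE Hs divr1 obs1 mulr1.
  rewrite Hi -(@est_aux_C R n n0 t); congr est_aux.
  apply: functional_extensionality => b'; apply: propositional_extensionality; split.
    by case=> b [-> ]; rewrite (est_up_C n0 _ (@inC1 R n)).
  move=> Cb'; exists (@fb R n (fun _ => 1)); split => //.
  by rewrite (est_up_C n0 _ (@inC1 R n)).
exists [seq @Fb R n p | p <- enum {ffun 'I_n -> bool}].
split.
  rewrite map_inj_uniq ?enum_uniq // => p1 p2 e.
  apply/ffunP => i.
  have := congr1 (fun f : {ffun option ('I_n * bool) -> R} => n%:R * f (Some (i, true))) e.
  rewrite /= !(fbT n0) => /eqP; rewrite eqr_nat.
  by case: (p1 i); case: (p2 i).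
split.
  by rewrite size_map -cardE card_ffun card_bool card_ord.
move=> b; rewrite (vert_iff n0); split.
  by case=> p ->; apply: map_f; rewrite mem_enum.
by case/mapP => p _ ->; exists p.
Qed.
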